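(* For any $r_0>0$ and $0<b\le1/4$ there exists $B>1$ such that for every sequence of disks $D(z_j,r_j)$, $j\in\mathbb{N}$, satisfying $\sum_{|z_j|\le r}r_j\le r/B$ for all $r>0$, and for every point $z\notin D(r_0)$, there is $r_z$ with $0<r_z\le b|z|$ such that the circle $\partial D(z,r_z)$ does not intersect $\bigcup_{j\in\mathbb{N}}D(z_j,r_j)$.
   Context: $D(z,r)=\{w:|w-z|<r\}$, $D(r)=D(0,r)$. *)

(* Defs.v *)
From Stdlib Require Import Reals.
From Coquelicot Require Export Coquelicot.
Open Scope R_scope.

Definition disk (z : C) (r : R) : C -> Prop := fun w => Cmod (w - z) < r.

Definition circle (z : C) (r : R) : C -> Prop := fun w => Cmod (w - z) = r.

Definition partial_mass (zs : nat -> C) (rs : nat -> R) (r : R) (n : nat) : R :=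
  sum_f_R0 (fun j => if Rle_dec (Cmod (zs j)) r then rs j else 0) n.

(* The series sum_{|z_j| <= r} r_j (nonnegative terms) is <= c
   iff all its partial sums are <= c. *)
Definition mass_le (zs : nat -> C) (rs : nat -> R) (r c : R) : Prop :=
  forall n : nat, partial_mass zs rs r n <= c.

(* Main.v *)
Require Import Defs.
From Stdlib Require Import Reals Lra Lia Classical.
From Coquelicot Require Import Coquelicot.
Open Scope R_scope.

Lemma term_le_sum (f : nat -> R) (n k : nat) :
  (forall j, 0 <= f j) -> (k <= n)%nat -> f k <= sum_f_R0 f n.
Proof.
  intros Hf Hk. induction n as [|n IH].
  - assert (k = 0%nat) by lia. subst. simpl. lra.
  - simpl. destruct (Nat.eq_dec k (S n)) as [->|Hne].
    + pose proof (cond_pos_sum f n) as Hp.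
      assert (0 <= sum_f_R0 f n).
      { clear -Hf. induction n; simpl; [apply Hf|]. specialize (Hf (S n)). lra. }
      lra.
    + assert (k <= n)%nat by lia. specialize (IH H). specialize (Hf (S n)). lra.
Qed.

Lemma sum_nonneg (f : nat -> R) n : (forall j, 0 <= f j) -> 0 <= sum_f_R0 f n.
Proof. intros Hf. induction n; simpl; [apply Hf|]. specialize (Hf (S n)). lra. Qed.

Lemma sum_le (f g : nat -> R) n : (forall j, f j <= g j) -> sum_f_R0 f n <= sum_f_R0 g n.
Proof. intros H. induction n; simpl; [apply H|]. specialize (H (S n)). lra. Qed.

Definition hh (l u : nat -> R) (j : nat) (y : R) := Rmax 0 (Rmin (u j) y - l j).
Definition TT l u n y := sum_f_R0 (fun j => hh l u j y) n.

Lemma hh_nonneg l u j y : 0 <= hh l u j y.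
Proof. unfold hh. apply Rmax_l. Qed.

Lemma hh_mono l u j x y : x <= y -> hh l u j x <= hh l u j y.
Proof.
  intros H. unfold hh. apply Rle_max_compat_l.
  assert (Rmin (u j) x <= Rmin (u j) y).
  { unfold Rmin. destruct (Rle_dec (u j) x), (Rle_dec (u j) y); lra. }
  lra.
Qed.

Lemma TT_mono_n l u n m x : (n <= m)%nat -> TT l u n x <= TT l u m x.
Proof.
  intros H. induction H. lra. unfold TT in *. simpl.
  pose proof (hh_nonneg l u (S m) x). lra.
Qed.

Lemma TT_diff l u m k x y : (k <= m)%nat -> x <= y ->
  hh l u k y - hh l u k x <= TT l u m y - TT l u m x.
Proof.
  intros Hk Hxy. unfold TT. rewrite <- minus_sum.
  apply (term_le_sum (fun j => hh l u j y - hh l u j x)); auto.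
  intros j. pose proof (hh_mono l u j x y Hxy). lra.
Qed.

Lemma hh_val l u k x : l k <= x <= u k -> hh l u k x = x - l k.
Proof.
  intros H. unfold hh. rewrite Rmin_right by lra. rewrite Rmax_right; lra.
Qed.

Lemma cover_lemma (a b M : R) (l u : nat -> R) :
  a <= b -> (forall n, TT l u n b <= M) -> M < b - a ->
  exists t, a <= t <= b /\ forall k, ~ (l k < t < u k).
Proof.
  intros Hab HM HMb.
  apply NNPP. intro Hno.
  assert (Hcov : forall t, a <= t <= b -> exists k, l k < t < u k).
  { intros t Ht. apply NNPP. intro Hn. apply Hno. exists t. split; auto.
    intros k Hk. apply Hn. eauto. }
  set (E := fun x => a <= x <= b /\ exists n, x - a <= TT l u n x).
  assert (HbE : bound E). { exists b. intros x [Hx _]. lra. }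
  assert (HaE : E a). { split. lra. exists 0%nat. unfold TT; simpl.
    pose proof (hh_nonneg l u 0 a). lra. }
  destruct (completeness E HbE (ex_intro _ a HaE)) as [s [Hub Hlub]].
  assert (Has : a <= s) by (apply Hub; auto).
  assert (Hsb : s <= b). { apply Hlub. intros x [Hx _]. lra. }
  destruct (Hcov s (conj Has Hsb)) as [k [Hlk Huk]].
  assert (Hx : exists x, E x /\ l k < x).
  { apply NNPP. intro Hn.
    assert (s <= l k). { apply Hlub. intros x Ex. destruct (Rle_dec x (l k)); auto.
      exfalso. apply Hn. exists x. split; auto. lra. }
    lra. }
  destruct Hx as [x [[Hx1 [n Hn]] Hxl]].
  assert (Hxs : x <= s) by (apply Hub; split; auto; eauto).
  set (y := Rmin b (u k)).
  assert (Hy1 : x <= y). { unfold y, Rmin. destruct (Rle_dec b (u k)); lra. }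
  assert (Hy2 : y <= b) by apply Rmin_l.
  assert (Hy3 : y <= u k) by apply Rmin_r.
  set (m := Nat.max n k).
  assert (Hym : y - a <= TT l u m y).
  { pose proof (TT_mono_n l u n m x ltac:(lia)).
    pose proof (TT_diff l u m k x y ltac:(lia) Hy1).
    rewrite (hh_val l u k x) in H0 by lra.
    rewrite (hh_val l u k y) in H0 by lra. lra. }
  assert (Hys : y <= s). { apply Hub. split. split; lra. eauto. }
  assert (Hyb : y = b). { unfold y in *. unfold Rmin in *.
    destruct (Rle_dec b (u k)); lra. }
  rewrite Hyb in Hym. specialize (HM m). lra.
Qed.

Lemma cmod_sym (a b : C) : Cmod (a - b) = Cmod (b - a).
Proof. rewrite <- Cmod_opp. f_equal. ring. Qed.

Lemma cmod_tri (a b c : C) : Cmod (a - c) <= Cmod (a - b) + Cmod (b - c).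
Proof.
  replace (a - c)%C with ((a - b) + (b - c))%C by ring. apply Cmod_triangle.
Qed.

Theorem mainTheorem16 :
  forall (r0 b : R), 0 < r0 -> 0 < b -> b <= 1/4 ->
  exists B : R, 1 < B /\
    forall (zs : nat -> C) (rs : nat -> R),
      (forall j, 0 < rs j) ->
      (forall r : R, 0 < r -> mass_le zs rs r (r / B)) ->
      forall z : C, ~ disk 0 r0 z ->
        exists rz : R, 0 < rz /\ rz <= b * Cmod z /\
          forall w : C, circle z rz w -> forall j : nat, ~ disk (zs j) (rs j) w.
Proof.
  intros r0 beta Hr0 Hb Hb4.
  set (B := 2 + 16 / beta).
  assert (HB16 : beta * B = 2 * beta + 16).
  { unfold B. field. lra. }
  assert (HB2 : 2 <= B). { unfold B. assert (0 < 16 / beta) by (apply Rdiv_lt_0_compat; lra). lra. }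
  exists B. split. lra.
  intros zs rs Hpos Hmass z Hz.
  set (rho := Cmod z).
  assert (Hrho : r0 <= rho).
  { unfold disk in Hz. replace (z - 0)%C with z in Hz by ring. fold rho in Hz. lra. }
  set (R0 := 2 * (1 + beta) * rho).
  set (l := fun j => Cmod (z - zs j) - rs j).
  set (u := fun j => Cmod (z - zs j) + rs j).
  assert (Hrj : forall j, rs j <= Cmod (zs j) / B).
  { intros j.
    assert (Hzj : 0 < Cmod (zs j)).
    { destruct (Rle_dec (Cmod (zs j)) 0) as [Hle|]; [|lra]. exfalso.
      assert (Hz0 : Cmod (zs j) = 0) by (pose proof (Cmod_ge_0 (zs j)); lra).
      set (e := rs j * B / 2).
      assert (He : 0 < e). { unfold e. specialize (Hpos j). apply Rdiv_lt_0_compat; [apply Rmult_lt_0_compat|]; lra. }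
      specialize (Hmass e He j). unfold partial_mass in Hmass.
      pose proof (term_le_sum (fun j0 => if Rle_dec (Cmod (zs j0)) e then rs j0 else 0) j j) as T.
      simpl in T. destruct (Rle_dec (Cmod (zs j)) e) as [|Hn]; [|lra].
      assert (rs j <= e / B). { eapply Rle_trans; [apply T|apply Hmass]; auto.
        intros j0. destruct (Rle_dec _ _); [specialize (Hpos j0)|]; lra. }
      unfold e in H. replace (rs j * B / 2 / B) with (rs j / 2) in H by (field; lra).
      specialize (Hpos j). lra. }
    specialize (Hmass _ Hzj j). unfold partial_mass in Hmass.
    pose proof (term_le_sum (fun j0 => if Rle_dec (Cmod (zs j0)) (Cmod (zs j)) then rs j0 else 0) j j) as T.
    simpl in T. destruct (Rle_dec (Cmod (zs j)) (Cmod (zs j))) as [|Hn]; [|lra].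
    eapply Rle_trans; [apply T|apply Hmass]; auto.
    intros j0. destruct (Rle_dec _ _); [specialize (Hpos j0)|]; lra. }
  assert (HM : forall n, TT l u n (beta * rho) <= 2 * (R0 / B)).
  { intros n. unfold TT.
    eapply Rle_trans.
    - apply (sum_le _ (fun j => 2 * (if Rle_dec (Cmod (zs j)) R0 then rs j else 0))).
      intros j. unfold hh, l, u. destruct (Rle_dec (Cmod (zs j)) R0) as [Hle|Hgt].
      + apply Rmax_lub. specialize (Hpos j); lra.
        pose proof (Rmin_l (Cmod (z - zs j) + rs j) (beta * rho)). lra.
      + apply Rmax_lub. lra.
        pose proof (Rmin_r (Cmod (z - zs j) + rs j) (beta * rho)).
        specialize (Hrj j).
        assert (Cmod (zs j) / B <= Cmod (zs j) / 2).
        { apply Rmult_le_compat_l. pose proof (Cmod_ge_0 (zs j)); lra.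
          apply Rinv_le_contravar; lra. }
        pose proof (cmod_tri (zs j) z 0). replace (zs j - 0)%C with (zs j) in H1 by ring.
        replace (z - 0)%C with z in H1 by ring. rewrite (cmod_sym (zs j) z) in H1.
        fold rho in H1. unfold R0 in Hgt. lra.
    - replace (sum_f_R0 (fun j => 2 * (if Rle_dec (Cmod (zs j)) R0 then rs j else 0)) n)
        with (2 * partial_mass zs rs R0 n).
      + apply Rmult_le_compat_l. lra. apply Hmass. unfold R0. nra.
      + unfold partial_mass. rewrite scal_sum. apply sum_eq. intros. ring. }
  assert (HMb : 2 * (R0 / B) < beta * rho - beta * rho / 2).
  { unfold R0. apply (Rmult_lt_reg_r B). lra.
    replace (2 * (2 * (1 + beta) * rho / B) * B) with (4 * (1 + beta) * rho) by (field; lra).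
    replace ((beta * rho - beta * rho / 2) * B) with ((beta * B) * rho / 2) by field.
    rewrite HB16. nra. }
  destruct (cover_lemma (beta * rho / 2) (beta * rho) _ l u ltac:(nra) HM HMb)
    as [t [Ht Hnc]].
  exists t. split. nra. split. fold rho. lra.
  intros w Hw j Hd. apply (Hnc j). unfold circle in Hw. unfold disk in Hd. unfold l, u.
  pose proof (cmod_tri z w (zs j)). pose proof (cmod_tri w (zs j) z).
  rewrite (cmod_sym z w) in H. rewrite (cmod_sym (zs j) z) in H0. lra.
Qed.
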